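(* Consider the single unicast index coding problem $\mathbb I$ with six messages $W_1,\dots,W_6$ and six receivers, where receiver $j$ demands only $W_j$ and has side information $S(j)={\cal W}\setminus(\{W_j\}\cup I_j)$, with $I_1=\{W_4\}$, $I_2=\{W_1,W_3\}$, $I_3=\{W_1\}$, $I_4=\emptyset$, $I_5=\{W_1,W_3,W_4\}$, $I_6=\{W_1,W_2,W_4\}$ (so $Interf_j(j)=I_j$). Then (a) $\mathbb I$ has no acyclic subset of messages of size $4$, and (b) $\mathbb I$ admits no valid scalar linear index code of length $3$ over any finite field.
   Context: Index coding setup: An index coding problem $\mathbb I$ over a finite field $\mathbb F$ consists of a set of messages ${\cal W}=\{W_1,\dots,W_n\}$ (each message is a symbol of $\mathbb F$ in the scalar setting), a set of receivers $[1:T]$, and for each receiver $j$ a demand set $D(j)\subseteq{\cal W}$ and a side-information set $S(j)\subseteq {\cal W}\setminus D(j)$. For a receiver $j$ and $W_k\in D(j)$, the interfering set is $Interf_k(j)={\cal W}\setminus(\{W_k\}\cup S(j))$. A scalar linear index code of length $L$ over $\mathbb F$ is an assignment of vectors $V_1,\dots,V_n\in\mathbb F^L$ to the messages; the source broadcasts $\sum_{i=1}^n V_iW_i\in\mathbb F^L$, and the code is valid if every receiver $j$ can recover every message of $D(j)$ from the broadcast codeword and the messages in $S(j)$. An acyclic subset of messages of size $4$ is a set of four distinct messages $W_{i_1},W_{i_2},W_{i_3},W_{i_4}$ such that for each $k\in\{1,2,3,4\}$ there is a receiver $j_k$ demanding $W_{i_k}$ with $\{W_{i_{k'}}:k'<k\}\subseteq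 Interf_{i_k}(j_k)$. *)

(* Defs.v *)
From HB Require Import structures.
From mathcomp Require Import all_boot all_order all_algebra.
Set Implicit Arguments. Unset Strict Implicit. Unset Printing Implicit Defensive.
Import GRing.Theory.
Local Open Scope ring_scope.

Record icp (n T : nat) := ICP {
  demand : 'I_T -> {set 'I_n};
  side   : 'I_T -> {set 'I_n}
}.

Definition icp_wf n T (P : icp n T) : Prop :=
  forall j, [disjoint demand P j & side P j].

Definition interf n T (P : icp n T) (k : 'I_n) (j : 'I_T) : {set 'I_n} :=
  ~: (k |: side P j).

Definition has_acyclic4 n T (P : icp n T) : Prop :=
  exists i : 'I_4 -> 'I_n, injective i /\
    forall k : 'I_4, exists j : 'I_T,
      i k \in demand P j /\
      [set i k' | k' : 'I_4 & (k' < k)%N] \subset interf P (i k) j.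

Definition codeword (F : fieldType) n L (V : 'I_n -> 'rV[F]_L) (w : 'I_n -> F)
  : 'rV[F]_L := \sum_i w i *: V i.

(* the messages known to a receiver with side information S (other
   coordinates masked to 0, so a decoder only sees W_i for i in S) *)
Definition restrict (F : fieldType) n (S : {set 'I_n}) (w : 'I_n -> F) : 'I_n -> F :=
  fun i => if i \in S then w i else 0.

Definition valid_scalar_linear_code (F : fieldType) n T L (P : icp n T)
  (V : 'I_n -> 'rV[F]_L) : Prop :=
  forall (j : 'I_T) (k : 'I_n), k \in demand P j ->
    exists dec : 'rV[F]_L -> ('I_n -> F) -> F,
      forall w : 'I_n -> F, dec (codeword V w) (restrict (side P j) w) = w k.

(* The specific problem: receiver j demands W_j, S(j) = W \ ({W_j} u I_j).
   0-based indices: message W_m is index m-1. *)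
Definition I6 (j : 'I_6) : {set 'I_6} :=
  match val j with
  | 0 => [set inord 3]
  | 1 => [set inord 0; inord 2]
  | 2 => [set inord 0]
  | 3 => set0
  | 4 => [set inord 0; inord 2; inord 3]
  | _ => [set inord 0; inord 1; inord 3]
  end.

Definition P6 : icp 6 6 :=
  ICP (fun j => [set j]) (fun j => ~: (j |: I6 j)).

(* Main.v *)
Require Import Defs.
From HB Require Import structures.
From mathcomp Require Import all_boot all_order all_algebra.
From Stdlib Require Import FunctionalExtensionality.
Set Implicit Arguments. Unset Strict Implicit. Unset Printing Implicit Defensive.
Import GRing.Theory.
Local Open Scope ring_scope.

Section LA.
Variable F : fieldType.

Lemma rank_row1 (a : 'rV[F]_3) : a != 0 -> \rank a = 1%N.
Proof.
move=> a0; have := rank_leq_row a; rewrite -mxrank_eq0 in a0.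
by case: (\rank a) a0 => [|[|n]].
Qed.

Lemma r2 (a b : 'rV[F]_3) : a != 0 -> ~~ (b <= a)%MS -> \rank (a + b)%MS = 2%N.
Proof.
move=> a0 nb; have [le eq] := mxrank_leqif_sup (addsmxSl a b).
move: eq; rewrite addsmx_sub submx_refl (negbTE nb) /= => /eqP ne.
have [le2 _] := mxrank_adds_leqif a b.
have := rank_leq_row b.
move: le le2 ne; rewrite rank_row1 //.
case: (\rank (a + b)%MS) => [|[|[|n]]] //= _; case: (\rank b) => [|[|m]] //.
Qed.

Lemma sub_eqrank m1 m2 (A : 'M[F]_(m1, 3)) (B : 'M[F]_(m2, 3)) :
  (A <= B)%MS -> (\rank B <= \rank A)%N -> (B <= A)%MS.
Proof.
move=> sAB le; have [le2 eq] := mxrank_leqif_sup sAB.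
by rewrite -eq eqn_leq le2 le.
Qed.

Lemma notfull m (A : 'M[F]_(m, 3)) (v : 'rV[F]_3) : ~~ (v <= A)%MS -> (\rank A <= 2)%N.
Proof.
move=> nv; have := rank_leq_col A; rewrite leq_eqVlt; case/orP => // full.
by move: nv; rewrite submx_full.
Qed.

Lemma la (v0 v1 v2 v3 v4 v5 : 'rV[F]_3) :
 ~~ (v0 <= v3)%MS -> ~~ (v1 <= v0 + v2)%MS -> ~~ (v2 <= v0)%MS -> v3 != 0 ->
 ~~ (v4 <= v0 + v2 + v3)%MS -> ~~ (v5 <= v0 + v1 + v3)%MS -> False.
Proof.
move=> N0 N1 N2 N3 N4 N5.
have rU := r2 N3 N0.
have v00 : v0 != 0 by apply: contra N0 => /eqP ->; rewrite sub0mx.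
have rT := r2 v00 N2.
have sU1 : (v3 + v0 <= v0 + v2 + v3)%MS.
  by rewrite addsmx_sub addsmxSr /= (submx_trans (addsmxSl v0 v2)) ?addsmxSl.
have sU2 : (v3 + v0 <= v0 + v1 + v3)%MS.
  by rewrite addsmx_sub addsmxSr /= (submx_trans (addsmxSl v0 v1)) ?addsmxSl.
have h4 : (\rank (v0 + v2 + v3)%MS <= \rank (v3 + v0)%MS)%N by rewrite rU; exact: notfull N4.
 have W1 := sub_eqrank sU1 h4.
have h5 : (\rank (v0 + v1 + v3)%MS <= \rank (v3 + v0)%MS)%N by rewrite rU; exact: notfull N5.
 have W2 := sub_eqrank sU2 h5.
have v2U : (v2 <= v3 + v0)%MS.
  by apply: submx_trans W1; rewrite (submx_trans (addsmxSr v0 v2)) ?addsmxSl.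
have v1U : (v1 <= v3 + v0)%MS.
  by apply: submx_trans W2; rewrite (submx_trans (addsmxSr v0 v1)) ?addsmxSl.
have TU : (v0 + v2 <= v3 + v0)%MS by rewrite addsmx_sub v2U addsmxSr.
have hr : (\rank (v3 + v0)%MS <= \rank (v0 + v2)%MS)%N by rewrite rU rT.
have UT := sub_eqrank TU hr.
by move: N1; rewrite (submx_trans v1U UT).
Qed.
End LA.

Lemma core (F : fieldType) n L (V : 'I_n -> 'rV[F]_L) (S : {set 'I_n}) k
  (c : 'I_n -> F) (dec : 'rV[F]_L -> ('I_n -> F) -> F) :
  c k = 1 -> (forall i, i \in S -> c i = 0) -> \sum_i c i *: V i = 0 ->
  ~ (forall w, dec (codeword V w) (restrict S w) = w k).
Proof.
move=> ck cS s0 H.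
have h1 := H c; have h0 := H (fun _ => 0).
have e1 : codeword V c = codeword V (fun _ => 0).
  by rewrite /codeword s0 big1 // => i _; rewrite scale0r.
have e2 : restrict S c = restrict S (fun _ => 0).
  apply: functional_extensionality => i; rewrite /restrict.
  by case: ifP => // /cS.
move: h1; rewrite e1 e2 h0 ck => /eqP; rewrite eq_sym oner_eq0.
by [].
Qed.

Lemma sumd (F : fieldType) n L (V : 'I_n -> 'rV[F]_L) (x : F) a :
  \sum_i (x * (i == a)%:R) *: V i = x *: V a.
Proof.
rewrite (bigD1 a) //= eqxx mulr1 big1 ?addr0 // => i /negbTE ->.
by rewrite mulr0 scale0r.
Qed.

Lemma span3 (F : fieldType) n L (V : 'I_n -> 'rV[F]_L) (S : {set 'I_n}) k a b c
  (dec : 'rV[F]_L -> ('I_n -> F) -> F) :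
  k \notin S -> a \notin S -> b \notin S -> c \notin S ->
  k != a -> k != b -> k != c -> (V k <= V a + V b + V c)%MS ->
  ~ (forall w, dec (codeword V w) (restrict S w) = w k).
Proof.
move=> kS aS bS cS ka kb kc /sub_addsmxP [[u1 u2] /= Vk].
have : (u1 *m (V a + V b)%MS <= V a + V b)%MS by apply: submxMl.
case/sub_addsmxP => [[x1 x2] /= e].
rewrite e (mx11_scalar x1) (mx11_scalar x2) (mx11_scalar u2) !mul_scalar_mx in Vk.
set al := x1 0 0 in Vk; set be := x2 0 0 in Vk; set ga := u2 0 0 in Vk.
apply: (core (c := fun i => 1 * (i == k)%:R -
   ((al * (i == a)%:R + be * (i == b)%:R) + ga * (i == c)%:R))).
- by rewrite eqxx (negbTE ka) (negbTE kb) (negbTE kc)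
     !mulr0 !addr0 mulr1 subr0.
- move=> i iS.
  have -> : (i == k) = false by apply/negbTE; apply: contraNneq kS => <-.
  have -> : (i == a) = false by apply/negbTE; apply: contraNneq aS => <-.
  have -> : (i == b) = false by apply/negbTE; apply: contraNneq bS => <-.
  have -> : (i == c) = false by apply/negbTE; apply: contraNneq cS => <-.
  by rewrite !mulr0 !addr0 subr0.
- under eq_bigr do rewrite scalerBl !scalerDl.
  by rewrite sumrB !big_split /= !sumd scale1r -Vk subrr.
Qed.

Lemma zero1 (F : fieldType) n L (V : 'I_n -> 'rV[F]_L) (S : {set 'I_n}) k
  (dec : 'rV[F]_L -> ('I_n -> F) -> F) :
  k \notin S -> V k = 0 ->
  ~ (forall w, dec (codeword V w) (restrict S w) = w k).
Proof.
move=> kS Vk; apply: (core (c := fun i => 1 * (i == k)%:R)).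
- by rewrite eqxx mulr1.
- move=> i iS.
  have -> : (i == k) = false by apply/negbTE; apply: contraNneq kS => <-.
  by rewrite mulr0.
- by rewrite sumd Vk scaler0.
Qed.

Definition J (j x : nat) : bool :=
  match j with
  | 0 => x == 3
  | 1 => (x == 0) || (x == 2)
  | 2 => x == 0
  | 3 => false
  | 4 => [|| x == 0, x == 2 | x == 3]
  | _ => [|| x == 0, x == 1 | x == 3]
  end%N.

Lemma memI6 (x j : 'I_6) : (x \in I6 j) = J (val j) (val x).
Proof.
case: j => [[|[|[|[|[|[|m]]]]]] hj] //=; rewrite /I6 /= !inE; rewrite -?[x == _](inj_eq val_inj) /= ?inordK //; by rewrite orbA.
Qed.

Lemma notin_self (k : 'I_6) : k \notin I6 k.
Proof. by rewrite memI6; case: k => [[|[|[|[|[|[|m]]]]]] ?]. Qed.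

Lemma nsub3 (F : fieldType) (V : 'I_6 -> 'rV[F]_3) (k a b c : 'I_6) :
  valid_scalar_linear_code P6 V -> a \in I6 k -> b \in I6 k -> c \in I6 k ->
  ~~ (V k <= V a + V b + V c)%MS.
Proof.
move=> H ha hb hc; apply/negP => sub.
have [dec hd] := H k k (set11 k).
have kI := notin_self k.
apply: (span3 (S := side P6 k) _ _ _ _ _ _ _ sub hd).
- by rewrite /= !inE eqxx.
- by rewrite /= !inE ha orbT.
- by rewrite /= !inE hb orbT.
- by rewrite /= !inE hc orbT.
- by apply: contraNneq kI => e; move: ha; rewrite -e.
- by apply: contraNneq kI => e; move: hb; rewrite -e.
- by apply: contraNneq kI => e; move: hc; rewrite -e.
Qed.

Lemma nzero3 (F : fieldType) (V : 'I_6 -> 'rV[F]_3) :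
  valid_scalar_linear_code P6 V -> V (@Ordinal 6 3 isT) != 0.
Proof.
move=> H; apply/eqP => V0.
have [dec hd] := H _ _ (set11 (@Ordinal 6 3 isT)).
apply: (zero1 (S := side P6 _) _ V0 hd).
by rewrite /= !inE eqxx.
Qed.

Lemma brute : all (fun d => all (fun c => all (fun b => all (fun a =>
  ~~ [&& J d a, J d b, J d c, J c a, J c b, a != b, a != c & b != c])
  (iota 0 6)) (iota 0 6)) (iota 0 6)) (iota 0 6).
Proof. by []. Qed.

Close Scope ring_scope.

Theorem mainTheorem10 :
  ~ has_acyclic4 P6 /\
  (forall (F : finFieldType) (V : 'I_6 -> 'rV[F]_3),
      ~ valid_scalar_linear_code P6 V).
Proof.
split.
  move=> [i [inj H]].
  have mem : forall k k' : 'I_4, (k' < k)%N -> J (val (i k)) (val (i k')).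
    move=> k k' lt; have [j [hj sub]] := H k.
    move: hj; rewrite /= inE => /eqP ej; subst j.
    have : i k' \in [set i k'0 | k'0 : 'I_4 & (k'0 < k)%N].
      by apply/imsetP; exists k' => //; rewrite inE.
    move/(subsetP sub); rewrite /interf /= !inE negb_or negbK.
    case/andP => ne /orP [e | m]; first by rewrite e in ne.
    by rewrite -memI6.
  have ne : forall a b : 'I_4, a != b -> val (i a) != val (i b).
    by move=> a b; rewrite (inj_eq val_inj) (inj_eq inj).
  have := brute.
  move/allP/(_ (val (i (@Ordinal 4 3 isT)))); rewrite mem_iota ltn_ord => /(_ isT).
  move/allP/(_ (val (i (@Ordinal 4 2 isT)))); rewrite mem_iota ltn_ord => /(_ isT).
  move/allP/(_ (val (i (@Ordinal 4 1 isT)))); rewrite mem_iota ltn_ord => /(_ isT).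
  move/allP/(_ (val (i (@Ordinal 4 0 isT)))); rewrite mem_iota ltn_ord => /(_ isT).
  by rewrite !mem // !ne.
move=> F V H.
pose o (m : nat) (h : (m < 6)%N) := @Ordinal 6 m h.
apply: (@la F (V (@Ordinal 6 0 isT)) (V (@Ordinal 6 1 isT)) (V (@Ordinal 6 2 isT))
   (V (@Ordinal 6 3 isT)) (V (@Ordinal 6 4 isT)) (V (@Ordinal 6 5 isT))).
- have N := nsub3 (k := @Ordinal 6 0 isT) (a := @Ordinal 6 3 isT) (b := @Ordinal 6 3 isT)
     (c := @Ordinal 6 3 isT) H.
  rewrite !memI6 in N; have {}N := N isT isT isT.
  apply: contra N => h; apply: submx_trans h _; rewrite -addsmxA addsmxSl //.
- have N := nsub3 (k := @Ordinal 6 1 isT) (a := @Ordinal 6 0 isT) (b := @Ordinal 6 2 isT)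
     (c := @Ordinal 6 2 isT) H.
  rewrite !memI6 in N; have {}N := N isT isT isT.
  apply: contra N => h; apply: submx_trans h _; rewrite addsmxSl //.
- have N := nsub3 (k := @Ordinal 6 2 isT) (a := @Ordinal 6 0 isT) (b := @Ordinal 6 0 isT)
     (c := @Ordinal 6 0 isT) H.
  rewrite !memI6 in N; have {}N := N isT isT isT.
  apply: contra N => h; apply: submx_trans h _; rewrite -addsmxA addsmxSl //.
- exact: nzero3.
- by apply: nsub3; rewrite ?memI6.
- by apply: nsub3; rewrite ?memI6.
Qed.
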